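(* Let $G=(V,E)$ be an $(n-4)$-regular graph on $n>4$ nodes. Let $\emptyset\ne V'\subseteq V$ with $|V'|=tn$, and let $\alpha n$ be the number of nodes of a largest clique in the induced subgraph $G[V']$. Then $$\mathsf M(V')\le\frac{4t^2+2\alpha-3t}{n-4}.$$
   Context: For a finite simple undirected graph $G=(V,E)$ with $m=|E|\ge1$ edges, degrees $d_v$, and $a_{u,v}=1$ if $\{u,v\}\in E$ and $0$ otherwise: for $C\subseteq V$, $\mathsf M(C)=\frac{1}{2m}\sum_{u\in C}\sum_{v\in C}\big(a_{u,v}-\frac{d_ud_v}{2m}\big)$, the sum over all ordered pairs including $u=v$. *)

(* Defs.v *)
From HB Require Import structures.
From mathcomp Require Import all_boot all_order all_algebra.
Set Implicit Arguments. Unset Strict Implicit. Unset Printing Implicit Defensive.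
Import Order.TTheory GRing.Theory Num.Theory.

Definition simple_graph (T : finType) (e : rel T) : Prop :=
  symmetric e /\ irreflexive e.

Definition deg (T : finType) (e : rel T) (v : T) : nat := #|[set u | e v u]|.

Definition nedges (T : finType) (e : rel T) : nat :=
  #|[set p : T * T | e p.1 p.2 && (enum_rank p.1 < enum_rank p.2)%N]|.

Local Open Scope ring_scope.
Definition adj (R : pzRingType) (T : finType) (e : rel T) (u v : T) : R :=
  (e u v)%:R.

Definition modularity (R : fieldType) (T : finType) (e : rel T) (C : {set T}) : R :=
  let m2 : R := (2 * nedges e)%:R in
  m2^-1 * \sum_(u in C) \sum_(v in C)
     (adj R e u v - (deg e u)%:R * (deg e v)%:R / m2).
Local Close Scope ring_scope.

Definition is_clique (T : finType) (e : rel T) (K : {set T}) : bool :=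
  [forall u in K, forall v in K, (u != v) ==> e u v].

Definition clique_number_in (T : finType) (e : rel T) (C : {set T}) : nat :=
  \max_(K : {set T} | (K \subset C) && is_clique e K) #|K|.

(* Main.v *)
Require Import Defs.
From HB Require Import structures.
From mathcomp Require Import all_boot all_order all_algebra.
Import Order.TTheory GRing.Theory Num.Theory.
From Stdlib Require Import Ring Field Lia ArithRing.
Set Implicit Arguments. Unset Strict Implicit.

Section C1.
Variables (T : finType) (e : rel T).
Hypothesis esym : symmetric e.
Hypothesis eirr : irreflexive e.

Definition nonadj (S : {set T}) : {set T * T} :=
  [set p | [&& p.1 \in S, p.2 \in S, p.1 != p.2 & ~~ e p.1 p.2]].

Lemma clique_ex (S : {set T}) :
  exists2 K : {set T}, (K \subset S) && is_clique e K & (2 * #|S| <= 2 * #|K| + #|nonadj S|)%N.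
Proof.
move: {2}#|S| (leqnn #|S|) => N; elim: N S => [|N IH] S HS.
  exists S; last by rewrite leq_addr.
  rewrite subxx /=; move: HS; rewrite leqn0 cards_eq0 => /eqP ->.
  by apply/forall_inP => u; rewrite inE.
case Hc: (is_clique e S).
  by exists S; [rewrite subxx Hc | rewrite leq_addr].
have: ~~ is_clique e S by rewrite Hc.
case/forall_inPn => x xS /forall_inPn [y yS]; rewrite negb_imply => /andP [nxy nexy].
have HS' : (#|S :\ x| <= N)%N.
  by move: HS; rewrite (cardsD1 x S) xS add1n ltnS.
have [K /andP [KS Kc] HK] := IH _ HS'.
exists K; first by rewrite Kc (subset_trans KS) // subD1set.
have sub : nonadj (S :\ x) \subset (nonadj S :\ (x, y)) :\ (y, x).
  apply/subsetP => [[u v]]; rewrite !inE /= => /and4P [/andP [ux uS] /andP [vx vS] uv nuv].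
  by rewrite uS vS uv nuv !andbT -!pair_eqE /= !negb_and ux vx orbT.
have c1 := subset_leq_card sub.
have : (#|nonadj S| = 2 + #|(nonadj S :\ (x, y)) :\ (y, x)|)%N.
  rewrite (cardsD1 (x, y)) (cardsD1 (y, x) (nonadj S :\ (x, y))).
  rewrite !inE /= xS yS nxy nexy (eq_sym y x) nxy esym nexy /=.
  by rewrite -pair_eqE /= negb_and nxy orbT.
move=> E; rewrite E.
move: HK; rewrite (cardsD1 x S) xS add1n mulnS => HK.
rewrite -(leq_add2l 2) in HK.
apply: leq_trans (HK) _.
by rewrite addnC -addnA leq_add2l addnC leq_add2l.
Qed.

End C1.

Section C2.
Variables (T : finType) (e : rel T).
Hypothesis esym : symmetric e.
Hypothesis eirr : irreflexive e.


Lemma sum_card (S : {set T}) (b : T -> T -> bool) :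
  (\sum_(u in S) \sum_(v in S) (b u v : nat))%N =
  #|[set p : T * T | [&& p.1 \in S, p.2 \in S & b p.1 p.2]]|.
Proof.
rewrite pair_big_dep /= -sum1_card big_mkcond [RHS]big_mkcond /=.
apply: eq_bigr => p _; rewrite inE; by case: (p.1 \in S); case: (p.2 \in S); case: (b _ _).
Qed.

Lemma count_pairs (S : {set T}) :
  ((\sum_(u in S) \sum_(v in S) (e u v : nat)) + #|nonadj e S| + #|S| = #|S| * #|S|)%N.
Proof.
have -> : #|nonadj e S| = (\sum_(u in S) \sum_(v in S) (((u != v) && ~~ e u v) : nat))%N.
  by rewrite sum_card; apply: eq_card => p; rewrite !inE.
have -> : (#|S| * #|S| = \sum_(u in S) #|S|)%N by rewrite sum_nat_const.
have -> : #|S| = (\sum_(u in S) 1)%N by rewrite sum1_card.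
rewrite -big_split -big_split /=.
apply: eq_bigr => u uS.
rewrite -big_split /= sum1_card.
rewrite (bigD1 u uS) [RHS](cardsD1 u S) uS /= eqxx eirr /= add0n.
rewrite addnC add1n; congr (_.+1).
rewrite -sum1_card; apply: eq_big => [v|v /andP [_ vu]]; first by rewrite !inE andbC.
by rewrite eq_sym vu; case: (e u v).
Qed.
End C2.

Section C3.
Variables (T : finType) (e : rel T).
Hypothesis esym : symmetric e.
Hypothesis eirr : irreflexive e.

Lemma deg_sum u : deg e u = (\sum_v (e u v : nat))%N.
Proof.
rewrite /deg -sum1_card big_mkcond /=; apply: eq_bigr => v _.
by rewrite inE; case: (e u v).
Qed.

Lemma sum_pairs : (\sum_u \sum_v (e u v : nat))%N = #|[set p : T * T | e p.1 p.2]|.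
Proof.
rewrite pair_big /= -sum1_card [RHS]big_mkcond /=; apply: eq_bigr => p _.
by rewrite inE; case: (e _ _).
Qed.

Lemma handshake : (2 * nedges e = \sum_u deg e u)%N.
Proof.
under eq_bigr do rewrite deg_sum.
rewrite sum_pairs /nedges.
set E := [set p : T * T | e p.1 p.2].
set L := [set p : T * T | e p.1 p.2 && (enum_rank p.1 < enum_rank p.2)%N].
have swK : involutive (fun p : T * T => (p.2, p.1)) by case.
have HL : L = E :&: L by apply/setP => p; rewrite !inE; case: (e _ _).
have HG : E :\: L = [set (p.2, p.1) | p in L].
  apply/setP => [[u v]]; rewrite !inE /=.
  apply/idP/imsetP.
    case/andP => nl euv; exists (v, u); last by [].
    rewrite inE /= esym euv /=; move: nl; rewrite euv /= -leqNgt leq_eqVlt.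
    case/orP => // /eqP /ord_inj /enum_rank_inj uv; by rewrite uv eirr in euv.
  case => [[a b]]; rewrite inE /= => /andP [eab ab] [-> ->].
  by rewrite esym eab /= -leqNgt ltnW.
rewrite -(cardsID L E) -HL HG card_imset; last exact: inv_inj.
by rewrite mul2n -addnn.
Qed.
End C3.

Local Open Scope ring_scope.
Section S.
Variable F : fieldType.
Definition fadd (x y : F) : F := x + y.
Definition fmul (x y : F) : F := x * y.
Definition fopp (x : F) : F := - x.
Definition fsub (x y : F) : F := x - y.
Definition finv (x : F) : F := x^-1.
Definition fdiv (x y : F) : F := x / y.
Definition f0 : F := 0.
Definition f1 : F := 1.
Lemma Fring : @ring_theory F f0 f1 fadd fmul fsub fopp eq.
Proof.
split; rewrite /f0 /f1 /fadd /fmul /fsub /fopp.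
exact: add0r. exact: addrC. exact: addrA. exact: mul1r. exact: mulrC. exact: mulrA. exact: mulrDl. by []. exact: subrr.
Qed.
Lemma Ffield : @field_theory F f0 f1 fadd fmul fsub fopp fdiv finv eq.
Proof.
split; [exact: Fring | rewrite /f0 /f1; by move/eqP; rewrite oner_eq0 | by [] | rewrite /f0 /f1 /fmul /finv => p Hp; apply: mulVf; exact/eqP].
Qed.
Add Field Ffield : Ffield.
Lemma key_id (a b A k c four two three : F) : a <> f0 -> b <> f0 ->
  fsub (fdiv (fsub (fadd (fmul four (fmul (fdiv k a) (fdiv k a))) (fmul two (fdiv c a))) (fmul three (fdiv k a))) b)
       (fmul (finv (fmul a b)) (fsub A (fmul (fmul (fdiv (fmul b b) (fmul a b)) k) k)))
  = fdiv (fsub (fadd (fadd (fmul (fmul k k) b) (fmul (fmul four k) k)) (fmul (fmul two c) a))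
               (fadd (fmul A a) (fmul (fmul three k) a)))
         (fmul (fmul a a) b).
Proof. move=> ha hb. field. auto. Qed.
End S.

Lemma key_ineq (R : realFieldType) (a b A k c : R) : 0 < a -> 0 < b ->
  A * a + 3 * k * a <= k * k * b + 4 * k * k + 2 * c * a ->
  (a * b)^-1 * (A - b * b / (a * b) * k * k) <= (4 * (k / a) ^+ 2 + 2 * (c / a) - 3 * (k / a)) / b.
Proof.
move=> ha hb H.
rewrite -subr_ge0 expr2.
have := @key_id R a b A k c 4 2 3.
rewrite /fsub /fdiv /fadd /fmul /finv /f0 => ->; last 2 first.
- by move/eqP; rewrite gt_eqF.
- by move/eqP; rewrite gt_eqF.
by apply: divr_ge0; [rewrite subr_ge0 | rewrite !mulr_ge0 // ltW].
Qed.

Theorem lemma4 (R : realFieldType) (T : finType) (e : rel T)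
  (Hsimple : simple_graph e)
  (Hn : (4 < #|T|)%N)
  (Hreg : forall v : T, deg e v = (#|T| - 4)%N)
  (V' : {set T}) (HV' : V' != set0) :
  let n : R := (#|T|)%:R in
  let t : R := (#|V'|)%:R / n in
  let alpha : R := (clique_number_in e V')%:R / n in
  modularity R e V' <= (4 * t ^+ 2 + 2 * alpha - 3 * t) / (n - 4).
Proof.
cbv zeta.
case: Hsimple => Hsym Hirr.
set N := #|T|.
set d := (N - 4)%N.
set k := #|V'|.
set c := clique_number_in e V'.
set A := (\sum_(u in V') \sum_(v in V') (e u v : nat))%N.
have hs : (2 * nedges e = N * d)%N.
  rewrite handshake //; under eq_bigr do rewrite Hreg.
  by rewrite sum_nat_const.
have HA := count_pairs Hirr V'.
have [K /andP [KS Kc] HK] := clique_ex Hsym V'.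
have Kc' : (#|K| <= c)%N by apply: (@leq_bigmax_cond _ (fun K : {set T} => (K \subset V') && is_clique e K) (fun K => #|K|) K); rewrite KS Kc.
have H0 : (A + 3 * k <= k * k + 2 * c)%N.
  rewrite -/A -/k in HA HK.
  rewrite -HA.
  have -> : (3 * k = k + 2 * k)%N by rewrite (mulSn 2).
  rewrite -!addnA leq_add2l (addnCA _ k) leq_add2l addnC; apply: (leq_trans HK).
  by rewrite leq_add2r leq_mul2l.
have H1 : (A * N + 3 * k * N <= k * k * d + 4 * k * k + 2 * c * N)%N.
  have E : N = (d + 4)%N by rewrite /d subnK // ltnW.
  have := leq_mul H0 (leqnn N).
  have -> : (k * k * d + 4 * k * k + 2 * c * N = (k * k + 2 * c) * N)%N.
    rewrite E; rewrite -!plusE -!multE; ring.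
  by rewrite mulnDl.
have Hb : N%:R - 4 = d%:R :> R by rewrite natrB // ltnW.
have Nd : ((2 * nedges e)%:R = N%:R * d%:R :> R) by rewrite hs natrM.
rewrite /modularity Nd.
have Hsum : \sum_(u in V') \sum_(v in V') (adj R e u v - (deg e u)%:R * (deg e v)%:R / (N%:R * d%:R))
   = A%:R - d%:R * d%:R / (N%:R * d%:R) * k%:R * k%:R.
  have Hreg' : forall v, deg e v = d by exact: Hreg.
  under eq_bigr do under eq_bigr do rewrite !Hreg'.
  under eq_bigr do rewrite sumrB sumr_const.
  rewrite sumrB sumr_const -/k !mulr_natr; congr (_ - _).
  rewrite /A natr_sum; apply: eq_bigr => u _; by rewrite natr_sum.
rewrite Hsum Hb; apply: key_ineq.
- by rewrite ltr0n (ltn_trans _ Hn).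
- by rewrite ltr0n subn_gt0.
- have : ((A * N + 3 * k * N)%:R <= (k * k * d + 4 * k * k + 2 * c * N)%:R :> R) by rewrite ler_nat.
  by rewrite !natrD !natrM.
Qed.
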